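(* Every non-trivial graph $G$ has a $T$-partition of width at most $2(\operatorname{tw}(G)+1)(9\Delta(G)-1)$ for some tree $T$ with $\Delta(T)\leq 6\Delta(G)$.
   Context: All graphs are finite and simple. A graph $G$ is non-trivial if $E(G)\neq\emptyset$. $\Delta(G)$ denotes the maximum degree of $G$, and $\operatorname{tw}(G)$ its treewidth. For a graph $G$ and a tree $T$, a $T$-partition of $G$ is a family $(V_x : x\in V(T))$ of pairwise disjoint subsets of $V(G)$ (some possibly empty) with union $V(G)$, indexed by the nodes of $T$, such that for every edge $vw$ of $G$, if $v\in V_x$ and $w\in V_y$ then $x=y$ or $xy\in E(T)$. The width of a $T$-partition is $\max\{|V_x| : x\in V(T)\}$. *)

(* Defs.v *)
From mathcomp Require Import all_boot.
Set Implicit Arguments. Unset Strict Implicit. Unset Printing Implicit Defensive.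

Definition simple_graph (V : finType) (e : rel V) : Prop :=
  symmetric e /\ irreflexive e.

Definition nontrivial (V : finType) (e : rel V) : Prop := exists u v, e u v.

Definition maxdeg (V : finType) (e : rel V) : nat :=
  \max_(v : V) #|[set w | e v w]|.

Definition is_tree (T : finType) (eT : rel T) : Prop :=
  [/\ simple_graph eT, 0 < #|T|,
      (forall x y : T, connect eT x y) &
      (forall c : seq T, 3 <= size c -> ~ ucycle eT c)].

Definition tree_decomposition (V : finType) (e : rel V)
  (I : finType) (eI : rel I) (B : I -> {set V}) : Prop :=
  [/\ is_tree eI,
      (forall v : V, exists i, v \in B i),
      (forall u v : V, e u v -> exists i, (u \in B i) && (v \in B i)) &
      (forall (v : V) (i j : I), v \in B i -> v \in B j ->
         connect (fun a b => [&& eI a b, v \in B a & v \in B b]) i j)].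

Definition td_width (V : finType) (I : finType) (B : I -> {set V}) : nat :=
  (\max_(i : I) #|B i|).-1.

Definition treewidth_is (V : finType) (e : rel V) (k : nat) : Prop :=
  (exists (I : finType) (eI : rel I) (B : I -> {set V}),
      tree_decomposition e eI B /\ td_width B = k) /\
  (forall (I : finType) (eI : rel I) (B : I -> {set V}),
      tree_decomposition e eI B -> k <= td_width B).

Definition T_partition (V : finType) (e : rel V) (T : finType) (eT : rel T)
  (P : T -> {set V}) : Prop :=
  [/\ (forall x y : T, x != y -> [disjoint P x & P y]),
      (forall v : V, exists x, v \in P x) &
      (forall (v w : V) (x y : T), e v w -> v \in P x -> w \in P y ->
         x = y \/ eT x y)].

Definition partition_width (V : finType) (T : finType) (P : T -> {set V}) : nat :=
  \max_(x : T) #|P x|.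

(* Main.v *)
Require Import Defs.
From mathcomp Require Import all_boot zify.
Set Implicit Arguments. Unset Strict Implicit. Unset Printing Implicit Defensive.


Lemma last_mkseq (T : Type) (f : nat -> T) n : last (f 0) (mkseq (fun i => f i.+1) n) = f n.
Proof. by case: n => // n; rewrite mkseqS last_rcons. Qed.

Lemma path_mkseq (T : Type) (e : rel T) (f : nat -> T) n :
  (forall u, u < n -> e (f u) (f u.+1)) -> path e (f 0) (mkseq (fun i => f i.+1) n).
Proof.
elim: n => [//|n IH] h.
rewrite mkseqS rcons_path IH; last by move=> u un; apply: h; lia.
by rewrite last_mkseq h.
Qed.

Lemma mkseqS0 (T : Type) (f : nat -> T) n : mkseq f n.+1 = f 0 :: mkseq (fun i => f i.+1) n.
Proof. by rewrite /mkseq /= -(addn0 1) iotaDl -map_comp. Qed.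

Lemma cycle_mkseq (T : Type) (e : rel T) (f : nat -> T) n :
  (forall u, u < n -> e (f u) (f u.+1)) -> e (f n) (f 0) -> cycle e (mkseq f n.+1).
Proof.
move=> h1 h2; rewrite mkseqS0 /= rcons_path path_mkseq //.
by rewrite last_mkseq.
Qed.

Section Rooted.
Variables (I : finType) (eI : rel I).
Hypothesis treeI : is_tree eI.
Variable r : I.

Lemma eI_sym : symmetric eI. Proof. by case: treeI => [[]]. Qed.
Lemma eI_irr : irreflexive eI. Proof. by case: treeI => [[]]. Qed.

Definition dpath z m := [exists s : m.-tuple I, path eI r s && (last r s == z)].
Lemma dex z : exists m, dpath z m.
Proof.
case: treeI => _ _ hc _.
case/connectP: (hc r z) => s ps ->.
exists (size s); apply/existsP; exists (in_tuple s); by rewrite /= ps eqxx.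
Qed.
Definition d z := ex_minn (dex z).

Lemma dpathP z m : reflect (exists2 s, path eI r s & (size s = m) /\ last r s = z) (dpath z m).
Proof.
apply: (iffP existsP) => [[s /andP[ps /eqP ls]]|[s ps [<- <-]]].
  by exists s => //; rewrite size_tuple.
by exists (in_tuple s); rewrite /= ps eqxx.
Qed.

Lemma d_min z m : dpath z m -> d z <= m.
Proof. rewrite /d; case: ex_minnP => m0 _ h; exact: h. Qed.
Lemma d_spec z : dpath z (d z).
Proof. rewrite /d; by case: ex_minnP. Qed.

Lemma d_r : d r = 0.
Proof. apply/eqP; rewrite -leqn0; apply: d_min; apply/dpathP; by exists [::]. Qed.

Lemma d0 z : d z = 0 -> z = r.
Proof. move=> h; case/dpathP: (d_spec z) => s _ []; rewrite h; by case: s. Qed.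

Lemma d_edge y z : eI y z -> d z <= (d y).+1.
Proof.
move=> eyz; apply: d_min; case/dpathP: (d_spec y) => s ps [hs ls].
apply/dpathP; exists (rcons s z); first by rewrite rcons_path ps ls.
by rewrite size_rcons hs last_rcons.
Qed.

Lemma d_pred z : z != r -> exists y, eI y z && ((d y).+1 == d z).
Proof.
move=> nz; case/dpathP: (d_spec z) => s ps [hs ls].
case/lastP: s ps hs ls => [|s x] ps hs ls.
  by move: ls nz => /= ->; rewrite eqxx.
move: ls; rewrite last_rcons => exz; subst x.
move: ps; rewrite rcons_path => /andP[ps e1].
exists (last r s); rewrite e1 /=.
have h1 : d (last r s) <= size s by apply: d_min; apply/dpathP; exists s.
have h2 := d_edge e1.
move: hs; rewrite size_rcons => hs; apply/eqP; lia.
Qed.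

Definition p z := if z == r then r else odflt r [pick y | eI y z && ((d y).+1 == d z)].

Lemma p_r : p r = r. Proof. by rewrite /p eqxx. Qed.

Lemma p_spec z : z != r -> eI (p z) z /\ (d (p z)).+1 = d z.
Proof.
move=> nz; rewrite /p (negbTE nz); case: pickP => [y /andP[e1 /eqP h]|h0] //=.
by case: (d_pred nz) => y hy; move: (h0 y); rewrite hy.
Qed.

Lemma d_p z : d (p z) = (d z).-1.
Proof.
case: (eqVneq z r) => [->|nz]; first by rewrite p_r d_r.
by case: (p_spec nz) => _ <-.
Qed.

Lemma d_iter m z : d (iter m p z) = d z - m.
Proof. elim: m => [|m IH]; first by rewrite subn0. by rewrite iterS d_p IH; lia. Qed.

Lemma iter_p_r m : iter m p r = r.
Proof. by elim: m => //= m ->; rewrite p_r. Qed.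

Lemma iter_d z : iter (d z) p z = r.
Proof. apply: d0; rewrite d_iter; lia. Qed.

Lemma iter_big m z : d z <= m -> iter m p z = r.
Proof. move=> h; rewrite -(subnK h) iterD iter_d; exact: iter_p_r. Qed.

Lemma ne_r z : 0 < d z -> z != r.
Proof. by move=> h; apply/eqP => ez; move: h; rewrite ez d_r. Qed.

(* the key use of acyclicity *)
Lemma eI_par a b : eI a b -> p a = b \/ p b = a.
Proof.
move=> eab.
case: (eqVneq (p a) b) => [|pa]; first by left.
case: (eqVneq (p b) a) => [|pb]; first by right.
exfalso.
have nab : a != b by apply/eqP => h; move: eab; rewrite h eI_irr.
pose isanc (x : I) := iter (d b - d x) p b == x.
have exT : exists t, isanc (iter t p a).
  by exists (d a); rewrite /isanc iter_d d_r subn0 iter_d.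
case: (ex_minnP exT) => t /eqP ht tmin.
set x := iter t p a in ht.
set s := d b - d x in ht.
have hta : forall u, u < t -> iter u p a != r.
  move=> u ut; apply/negP => /eqP hu.
  have := tmin u; rewrite /isanc hu d_r subn0 iter_d eqxx => /(_ isT); lia.
have tda : t <= d a.
  case: (leqP t (d a)) => // h; have := tmin (d a).
  by rewrite /isanc iter_d d_r subn0 iter_d eqxx => /(_ isT); lia.
have dx : d x = d a - t by rewrite /x d_iter.
have sdb : s <= d b by rewrite /s; lia.
have htb : forall v, v < s -> iter v p b != r.
  move=> v vs; apply: ne_r; rewrite d_iter; rewrite /s in vs; lia.
pose f u := if u <= t then iter u p a else iter (t + s - u) p b.
have eEp : forall y, y != r -> eI y (p y) by move=> y /p_spec [h _]; rewrite eI_sym.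
have ePe : forall y, y != r -> eI (p y) y by move=> y /p_spec [].
have fA : forall u, u <= t -> f u = iter u p a by move=> u h; rewrite /f h.
have fB : forall u, t < u -> f u = iter (t + s - u) p b.
  by move=> u h; rewrite /f; have -> : (u <= t) = false by lia.
have hcyc : cycle eI (mkseq f (t + s).+1).
  apply: cycle_mkseq.
    move=> u us.
    case: (ltnP u t) => [ut|tu].
      rewrite fA ?fA; [|lia|lia]; rewrite iterS; apply: eEp; exact: hta.
    case: (eqVneq u t) => [eut|nut].
      subst u; rewrite fA // fB //.
      have s0 : 0 < s by lia.
      have -> : t + s - t.+1 = s.-1 by lia.
      rewrite -/x -{1}ht.
      have -> : iter s p b = p (iter s.-1 p b) by rewrite -iterS prednK.
      apply: ePe; apply: htb; lia.
    rewrite fB ?fB; [|lia|lia].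
    have -> : t + s - u = (t + s - u.+1).+1 by lia.
    rewrite iterS; apply: ePe; apply: htb; lia.
  rewrite (fA 0) //.
  case: (posnP s) => [s0|s0].
    rewrite fA; last by lia.
    rewrite s0 addn0 -/x.
    have -> : x = b by rewrite -ht s0.
    rewrite eI_sym; exact: eab.
  rewrite fB; last by lia.
  rewrite subnn; change (eI b a); by rewrite eI_sym.
have huniq : uniq (mkseq f (t + s).+1).
  apply/mkseq_uniqP => u v; rewrite !inE => hu hv.
  have ancB : forall w w', w' <= t -> w < s -> iter w' p a = iter w p b -> False.
    move=> w w' w't ws e1.
    have : isanc (iter w' p a).
      by rewrite /isanc e1 d_iter; have -> : d b - (d b - w) = w by lia.
    move=> /tmin tw; have ew : w' = t by lia.
    subst w'; move: e1; rewrite -/x -ht => e2.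
    have := congr1 d e2; rewrite !d_iter; lia.
  case: (leqP u t) => ut; case: (leqP v t) => vt.
  - rewrite !fA // => e1; have := congr1 d e1; rewrite !d_iter; lia.
  - rewrite fA // fB // => e1; case: (ancB (t + s - v) u ut ltac:(lia) e1).
  - rewrite fB // fA // => e1; case: (ancB (t + s - u) v vt ltac:(lia) (esym e1)).
  - rewrite !fB // => e1; have := congr1 d e1; rewrite !d_iter; lia.
have hsize : 3 <= size (mkseq f (t + s).+1).
  rewrite size_mkseq.
  case: (posnP t) => [t0|tpos].
    subst t; move: ht; rewrite /x /= => ht.
    case: (posnP s) => [s0|spos]; first by move: ht; rewrite s0 /= => hb; move: nab; rewrite hb eqxx.
    case: (eqVneq s 1) => [s1|]; last by lia.
    by move: ht pb; rewrite s1 /= => ->; rewrite eqxx.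
  case: (posnP s) => [s0|]; last by lia.
  move: ht; rewrite s0 /= => hb.
  case: (eqVneq t 1) => [t1|]; last by lia.
  by move: hb pa; rewrite /x t1 /= => ->; rewrite eqxx.
case: treeI => _ _ _ hnc.
by apply: (hnc _ hsize); rewrite /ucycle hcyc huniq.
Qed.

End Rooted.
Lemma sum_bigcup_le (T J : finType) (A : {pred J}) (F : J -> {set T}) (w : T -> nat) :
  \sum_(z in \bigcup_(i in A) F i) w z <= \sum_(i in A) \sum_(z in F i) w z.
Proof.
rewrite (big_mkcond (fun z => z \in _)) /=.
under [X in _ <= X]eq_bigr do rewrite (big_mkcond (fun z => z \in _)).
rewrite [X in _ <= X](exchange_big) /=.
apply: leq_sum => z _; case: ifP => // /bigcupP [i iA ziF].
by rewrite (bigD1 i) //= ziF leq_addr.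
Qed.

Lemma sum_sub_le (T : finType) (A B : {set T}) (w : T -> nat) :
  A \subset B -> \sum_(z in A) w z <= \sum_(z in B) w z.
Proof.
move=> sAB; rewrite [X in _ <= X](big_setID A) /= (setIidPr sAB).
exact: leq_addr.
Qed.

Section Desc.
Variables (I : finType) (eI : rel I).
Hypothesis treeI : is_tree eI.
Variable r : I.
Local Notation p := (p treeI r).
Local Notation d := (d treeI r).

Definition desc y := [set z | iter (d z - d y) p z == y].
Definition children y := [set c | (p c == y) && (c != y)].

Lemma desc_refl y : y \in desc y.
Proof. by rewrite inE subnn. Qed.

Lemma d_child y c : c \in children y -> d c = (d y).+1.
Proof.
rewrite inE => /andP[/eqP pc ncy].
have ncr : c != r by apply/eqP => h; move: pc ncy; rewrite h p_r => ->; rewrite eqxx.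
by case: (p_spec treeI ncr) => _ <-; rewrite pc.
Qed.

Lemma desc_d y z : z \in desc y -> d y <= d z.
Proof. rewrite inE => /eqP h; have := congr1 d h; rewrite d_iter; lia. Qed.

Lemma desc_child y c z : c \in children y -> z \in desc c -> z \in desc y.
Proof.
move=> hc; rewrite !inE => /eqP hz.
have := desc_d (z := z) (y := c); rewrite inE hz eqxx => /(_ isT) dcz.
have dc := d_child hc.
have -> : d z - d y = (d z - d c).+1 by lia.
by rewrite iterS hz; move: hc; rewrite inE => /andP[/eqP -> _].
Qed.

Lemma notin_desc_child y c : c \in children y -> y \notin desc c.
Proof. move=> hc; apply/negP => /desc_d; rewrite (d_child hc); lia. Qed.

Definition hchild y z := iter (d z - d y).-1 p z.

Lemma hchild_spec y z : z \in desc y -> z != y -> hchild y z \in children y /\ z \in desc (hchild y z).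
Proof.
move=> hz nzy; have dyz := desc_d hz.
move: hz; rewrite inE => /eqP hz.
have lt : d y < d z.
  case: (ltngtP (d y) (d z)) => // h; first lia.
  by move: hz nzy; rewrite -h subnn /= => ->; rewrite eqxx.
have dh : d (hchild y z) = (d y).+1 by rewrite /hchild d_iter; lia.
split.
  rewrite inE /hchild -iterS prednK ?subn_gt0 // hz eqxx /=.
  by apply/eqP => h; move: dh; rewrite /hchild h; lia.
by rewrite inE dh /hchild; have -> : d z - (d y).+1 = (d z - d y).-1 by lia.
Qed.

Lemma hchild_eq y c z : c \in children y -> z \in desc c -> hchild y z = c.
Proof.
move=> hc; rewrite inE => /eqP hz.
rewrite /hchild (d_child hc) in hz *.
by have -> : (d z - d y).-1 = d z - (d y).+1 by lia.
Qed.

Lemma desc_split y z : z \in desc y -> z != y -> exists2 c, c \in children y & z \in desc c.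
Proof. by move=> h1 h2; case: (hchild_spec h1 h2) => h3 h4; exists (hchild y z). Qed.

Lemma sum_desc (w : I -> nat) y :
  \sum_(z in desc y) w z = w y + \sum_(c in children y) \sum_(z in desc c) w z.
Proof.
rewrite (bigD1 y) ?desc_refl //=; congr (_ + _).
rewrite (partition_big (hchild y) (fun c => c \in children y)) /=; last first.
  by move=> z /andP[h1 h2]; case: (hchild_spec h1 h2).
apply: eq_bigr => c hc; apply: eq_bigl => z.
apply/idP/idP.
  by move=> /andP[/andP[h1 h2] /eqP <-]; case: (hchild_spec h1 h2).
move=> hz; rewrite (desc_child hc hz) (hchild_eq hc hz) eqxx andbT /=.
by apply/eqP => e1; move: hz (notin_desc_child hc); rewrite e1 => ->.
Qed.

Definition maxd := \max_(i : I) d i.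

Lemma tree_ind (P : I -> Prop) :
  (forall y, (forall c, c \in children y -> P c) -> P y) -> forall y, P y.
Proof.
move=> h.
suff: forall m y, maxd - d y <= m -> P y by move=> H y; exact: (H _ y (leqnn _)).
elim=> [|m IH] y hy; apply: h => c hc.
  have := @leq_bigmax _ d c; rewrite -/maxd (d_child hc); lia.
apply: IH; have := @leq_bigmax _ d c; rewrite -/maxd (d_child hc); lia.
Qed.

Lemma desc_root z : z \in desc r.
Proof. by rewrite inE d_r subn0 iter_d. Qed.

End Desc.
Lemma card_bigcup_le (T J : finType) (A : {pred J}) (F : J -> {set T}) :
  #|\bigcup_(i in A) F i| <= \sum_(i in A) #|F i|.
Proof.
rewrite -sum1_card; apply: leq_trans (sum_bigcup_le A F (fun _ => 1)) _.
by apply: leq_sum => i _; rewrite sum1_card.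
Qed.

Lemma leq_bigD1 (J : finType) (A : {pred J}) (F : J -> nat) j :
  j \in A -> F j <= \sum_(i in A) F i.
Proof. by move=> hj; rewrite (bigD1 j) //= leq_addr. Qed.

Section Jumps.
Variables (I : finType) (eI : rel I).
Hypothesis treeI : is_tree eI.
Variable r : I.
Local Notation p := (p treeI r).
Local Notation d := (d treeI r).
Local Notation desc := (desc treeI r).
Local Notation children := (children treeI r).
Variable omega : I -> nat.
Variable tau : nat.
Hypothesis tau_pos : 0 < tau.

Definition W y := \sum_(z in desc y) omega z.
Definition L y := W y %/ tau.
Definition jump y := (0 < L y) && [forall c in children y, L c < L y].
Definition M := [set y | jump y].

Lemma W_split y : W y = omega y + \sum_(c in children y) W c.
Proof. exact: sum_desc. Qed.

Lemma sum_div_le (J : finType) (A : {pred J}) (F : J -> nat) :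
  \sum_(j in A) (F j %/ tau) <= (\sum_(j in A) F j) %/ tau.
Proof.
rewrite leq_divRL // big_distrl /=; apply: leq_sum => j _; exact: leq_divM.
Qed.

Lemma L_super y : \sum_(c in children y) L c <= L y.
Proof.
apply: leq_trans (sum_div_le _ _) _; apply: leq_div2r.
rewrite W_split; exact: leq_addl.
Qed.

Lemma L_mono y c : c \in children y -> L c <= L y.
Proof. move=> hc; apply: leq_trans (L_super y); exact: (leq_bigD1 _ hc). Qed.

Lemma M_pos y : y \in M -> 0 < L y.
Proof. by rewrite inE => /andP[]. Qed.

Lemma nonjump y : y \notin M -> 0 < L y -> exists2 c, c \in children y & L y <= L c.
Proof.
rewrite inE /jump => /nandP [|]; first by move/negbTE => ->.
move=> /forall_inPn [c hc hlt] _; exists c => //; by rewrite leqNgt.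
Qed.

Lemma one_pos y c1 c2 : y \notin M -> c1 \in children y -> c2 \in children y ->
  0 < L c1 -> 0 < L c2 -> c1 = c2.
Proof.
move=> yM h1 h2 l1 l2; apply/eqP; apply/negPn/negP => n12.
have ly : 0 < L y by apply: leq_trans l1 (L_mono h1).
case: (nonjump yM ly) => c0 h0 l0.
have S := L_super y.
case: (eqVneq c0 c1) => [e0|n01].
  subst c0; move: S; rewrite (bigD1 c1) //= (bigD1 c2) /=; last by rewrite h2 eq_sym.
  lia.
move: S; rewrite (bigD1 c0) //= (bigD1 c1) /=; last by rewrite h1 eq_sym.
lia.
Qed.

Lemma K_le y : y \notin M -> \sum_(c in children y) (0 < L c) <= (0 < L y).
Proof.
move=> yM.
case: (pickP (fun c => (c \in children y) && (0 < L c))) => [c1 /andP[h1 l1]|h0].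
  rewrite (bigD1 c1) //= l1 big1 /=.
    by have := L_mono h1; lia.
  move=> c /andP[hc nc]; case: (posnP (L c)) => [//|lc].
  by move: nc; rewrite (one_pos yM hc h1 lc l1) eqxx.
rewrite big1 // => c hc; by move: (h0 c); rewrite hc /= => /negbT; case: (0 < L c).
Qed.

Definition J y := \sum_(z in desc y) (z \in M : nat).

Lemma J_bound y : J y + (0 < L y) <= 2 * L y.
Proof.
elim/(@tree_ind _ _ treeI r): y => y IH.
have hJ : J y = (y \in M) + \sum_(c in children y) J c by exact: sum_desc.
have hS : \sum_(c in children y) J c + \sum_(c in children y) (0 < L c) <= 2 * \sum_(c in children y) L c.
  rewrite -big_split /= big_distrr /=; apply: leq_sum => c hc; exact: IH.
have sup := L_super y.
rewrite hJ.
case: (boolP (y \in M)) => yM.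
  have ly := M_pos yM.
  have hlt : forall c, c \in children y -> L c < L y.
    by move: yM; rewrite inE => /andP[_ /forall_inP].
  have hK : \sum_(c in children y) L c <= \sum_(c in children y) (0 < L c) * (L y).-1.
    apply: leq_sum => c hc; have := hlt c hc; case: (posnP (L c)) => [->//|h].
    rewrite mul1n; lia.
  rewrite -big_distrl /= in hK.
  set K := \sum_(c in children y) (0 < L c) in hS hK.
  set S := \sum_(c in children y) L c in hS hK sup.
  set SJ := \sum_(c in children y) J c in hS.
  rewrite ly /=.
  case: (leqP 2 K) => hk; first by lia.
  case: (posnP K) => hk0.
    move: hK; rewrite hk0 mul0n leqn0 => /eqP S0; lia.
  have K1 : K = 1 by lia.
  move: hK; rewrite K1 mul1n => hK; lia.
rewrite add0n.
case: (posnP (L y)) => ly.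
  move: sup; rewrite ly leqn0 => /eqP S0; lia.
case: (nonjump yM ly) => c0 h0 l0.
have : 1 <= \sum_(c in children y) (0 < L c).
  rewrite (bigD1 c0) //=; have -> : 0 < L c0 by lia. by [].
lia.
Qed.

Definition stop z := (z == r) || (p z \in M).
Definition gstep z := if stop z then z else p z.
Definition top z := iter (d z) gstep z.
Definition G y := [set z | (z \in desc y) && [forall m : 'I_(d z - d y).+1, iter m p z \notin M]].
Definition bot y := [set m in M | p m \in G y].

Lemma iter_gstep_stop m z : stop z -> iter m gstep z = z.
Proof. move=> hs; elim: m => //= m ->; by rewrite /gstep hs. Qed.

Lemma top_stop z : stop z -> top z = z.
Proof. exact: iter_gstep_stop. Qed.

Lemma top_step z : ~~ stop z -> top z = top (p z).
Proof.
move=> hs; have nzr : z != r by move: hs; rewrite /stop negb_or => /andP[].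
have [_ hd] := p_spec treeI nzr.
by rewrite /top -hd iterSr /gstep (negbTE hs).
Qed.

Lemma top_is_stop z : stop (top z).
Proof.
move: {-1}(d z) (erefl (d z)) => m; elim: m z => [|m IH] z hz.
  by rewrite (d0 hz) top_stop /stop eqxx.
case: (boolP (stop z)) => hs; first by rewrite top_stop.
rewrite top_step //; apply: IH.
have nzr : z != r by move: hs; rewrite /stop negb_or => /andP[].
have [_ hd] := p_spec treeI nzr; lia.
Qed.

Lemma G_refl z : z \notin M -> z \in G z.
Proof.
move=> zM; rewrite inE desc_refl /=; apply/forallP => m.
have hm : (m : nat) = 0 by case: m => k; rewrite subnn => hk /=; lia.
by rewrite hm.
Qed.

Lemma G_up y z : p z \in G y -> z \notin M -> z \in G y.
Proof.
case: (eqVneq z r) => [->|nzr]; first by rewrite p_r.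
have [_ hd] := p_spec treeI nzr.
rewrite !inE => /andP[/eqP h1 /forallP h2] zM.
have dyp : d y <= d (p z) by have := congr1 d h1; rewrite d_iter; lia.
have -> : d z - d y = (d (p z) - d y).+1 by lia.
rewrite iterSr h1 eqxx /=; apply/forallP => -[m hm] /=.
case: m hm => [|m] hm; first by rewrite /= inE.
rewrite iterSr; exact: (h2 (Ordinal (hm : m < (d (p z) - d y).+1))).
Qed.

Lemma G_top z : z \notin M -> z \in G (top z).
Proof.
move: {-1}(d z) (erefl (d z)) => m; elim: m z => [|m IH] z hz zM.
  have zr := d0 hz; rewrite zr in zM *.
  by rewrite top_stop; [exact: G_refl | rewrite /stop eqxx].
case: (boolP (stop z)) => hs; first by rewrite top_stop // G_refl.
have nzr : z != r by move: hs; rewrite /stop negb_or => /andP[].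
have pzM : p z \notin M by move: hs; rewrite /stop negb_or => /andP[].
have [_ hd] := p_spec treeI nzr.
rewrite top_step //; apply: G_up => //; apply: IH => //; lia.
Qed.

Lemma G_notM y z : z \in G y -> z \notin M.
Proof. by rewrite inE => /andP[_ /forallP /(_ ord0)]. Qed.

Lemma G_y y z : z \in G y -> y \notin M.
Proof.
rewrite inE => /andP[hd /forallP /(_ (Ordinal (ltnSn _)))] /=.
by move: hd; rewrite inE => /eqP ->.
Qed.

Lemma top_notM z : z \notin M -> top z \notin M.
Proof. by move/G_top/G_y. Qed.

Lemma top_edge a b : eI a b -> a \notin M -> b \notin M -> top a = top b.
Proof.
move=> eab aM bM.
have nab : a != b by apply/eqP => h; move: eab; rewrite h (eI_irr treeI).
case: (eI_par treeI r eab) => h.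
  have nar : a != r by apply/eqP => ar; move: h nab; rewrite ar p_r => ->; rewrite eqxx.
  by rewrite top_step ?h // /stop (negbTE nar) h (negbTE bM).
have nbr : b != r by apply/eqP => br; move: h nab; rewrite br p_r => ->; rewrite eqxx.
by rewrite [top b]top_step ?h // /stop (negbTE nbr) h (negbTE aM).
Qed.

Lemma G_split y : y \notin M ->
  G y \subset y |: \bigcup_(c in [set c in children y | c \notin M]) G c.
Proof.
move=> yM; apply/subsetP => z hz; rewrite !inE.
case: (eqVneq z y) => //= nzy.
have zd : z \in desc y by move: hz; rewrite inE => /andP[].
case: (hchild_spec zd nzy) => hc zc.
apply/bigcupP; exists (hchild treeI r y z).
  rewrite inE hc /=.
  move: hz; rewrite inE => /andP[_ /forallP h].
  have dyz := desc_d zd.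
  have lt : d y < d z.
    case: (ltngtP (d y) (d z)) => // e1; first lia.
    by move: zd nzy; rewrite inE -e1 subnn /= => /eqP ->; rewrite eqxx.
  have hlt : (d z - d y).-1 < (d z - d y).+1 by lia.
  exact: (h (Ordinal hlt)).
rewrite inE zc /=.
move: hz; rewrite inE => /andP[_ /forallP h]; apply/forallP => m.
have dh := d_child hc.
have dyz := desc_d zd.
have hm : m < (d z - d y).+1 by have := ltn_ord m; lia.
exact: (h (Ordinal hm)).
Qed.

Lemma region_weight y : y \notin M -> \sum_(z in G y) omega z + tau * L y <= W y.
Proof.
elim/(@tree_ind _ _ treeI r): y => y IH yM.
have h1 : \sum_(z in G y) omega z <= omega y + \sum_(c in [set c in children y | c \notin M]) \sum_(z in G c) omega z.
  apply: leq_trans (sum_sub_le _ (G_split yM)) _.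
  rewrite (big_setD1 y) ?setU11 //=.
  apply: leq_add => //; apply: leq_trans (sum_bigcup_le _ _ _).
  apply: sum_sub_le; apply/subsetP => z; rewrite in_setD1 in_setU1 => /andP[/negbTE -> //].
have h2 : \sum_(c in [set c in children y | c \notin M]) \sum_(z in G c) omega z + tau * \sum_(c in children y) L c <= \sum_(c in children y) W c.
  rewrite big_distrr /=.
  have -> : \sum_(c in [set c in children y | c \notin M]) \sum_(z in G c) omega z = \sum_(c in children y) (c \notin M) * \sum_(z in G c) omega z.
    rewrite big_mkcond [in RHS]big_mkcond; apply: eq_bigr => c _; rewrite inE.
    by case: (c \in children y); case: (c \notin M); rewrite ?mul1n ?mul0n.
  rewrite -big_split; apply: leq_sum => c hc.
  case: (boolP (c \in M)) => cM /=.
    by rewrite mul0n add0n mulnC; exact: leq_divM.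
  by rewrite mul1n; apply: IH.
have h3 : L y <= \sum_(c in children y) L c.
  case: (posnP (L y)) => [->//|ly].
  case: (nonjump yM ly) => c0 h0 l0; apply: leq_trans l0 _; exact: (leq_bigD1 _ h0).
rewrite W_split.
have := leq_mul (leqnn tau) h3; lia.
Qed.

Lemma bot_le y : y \notin M -> #|bot y| <= (0 < L y).
Proof.
elim/(@tree_ind _ _ treeI r): y => y IH yM.
have hsub : bot y \subset (children y :&: M) :|: \bigcup_(c in [set c in children y | c \notin M]) bot c.
  apply/subsetP => m; rewrite in_set => /andP[mM pmG].
  case: (eqVneq (p m) y) => [pmy|pmny].
    rewrite in_setU in_setI mM andbT; apply/orP; left.
    rewrite in_set pmy eqxx /=; apply/eqP => my.
    by move: yM; rewrite -my mM.
  rewrite in_setU; apply/orP; right.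
  move/subsetP: (G_split yM) => /(_ _ pmG); rewrite in_setU1 (negbTE pmny) /= => /bigcupP [c hc pmc].
  by apply/bigcupP; exists c => //; rewrite in_set mM.
apply: leq_trans (subset_leq_card hsub) _.
apply: leq_trans (leq_card_setU _ _) _.
apply: leq_trans (leq_add (leqnn _) (card_bigcup_le _ _)) _.
apply: leq_trans (K_le yM).
have -> : #|children y :&: M| = \sum_(c in children y) (c \in M).
  rewrite -sum1_card big_mkcond [in RHS]big_mkcond; apply: eq_bigr => c _.
  by rewrite in_setI; case: (c \in children y); case: (c \in M).
have -> : \sum_(c in [set c in children y | c \notin M]) #|bot c| = \sum_(c in children y) (c \notin M) * #|bot c|.
  rewrite big_mkcond [in RHS]big_mkcond; apply: eq_bigr => c _; rewrite in_set.
  by case: (c \in children y); case: (c \notin M); rewrite ?mul1n ?mul0n.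
rewrite -big_split; apply: leq_sum => c hc.
case: (boolP (c \in M)) => cM /=.
  by rewrite addn0; have := M_pos cM; case: (0 < L c).
by rewrite add0n mul1n; apply: IH.
Qed.

End Jumps.
Section Sep.
Variables (V : finType) (e : rel V) (I : finType) (eI : rel I) (B : I -> {set V}).
Hypothesis hTD : tree_decomposition e eI B.
Variable n : nat.
Hypothesis hn : forall i, #|B i| <= n.
Hypothesis npos : 0 < n.
Variable r : I.
Variables U Q : {set V}.
Hypothesis QU : Q \subset U.

Lemma td_tree : is_tree eI. Proof. by case: hTD. Qed.
Lemma td_cover v : exists i, v \in B i. Proof. by case: hTD. Qed.
Lemma td_edge u v : e u v -> exists i, (u \in B i) && (v \in B i). Proof. by case: hTD => _ _ h _; exact: h. Qed.
Lemma td_conn v i j : v \in B i -> v \in B j ->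
  connect (fun a b => [&& eI a b, v \in B a & v \in B b]) i j.
Proof. by case: hTD => _ _ _ h; exact: h. Qed.

Definition rho q := odflt r [pick i | q \in B i].
Lemma rho_in q : q \in B (rho q).
Proof.
rewrite /rho; case: pickP => [i //|h0].
by case: (td_cover q) => i hi; move: (h0 i); rewrite hi.
Qed.

Definition omega i := #|[set q in Q | rho q == i]|.
Definition tau := n.*2.
Lemma tau_pos : 0 < tau. Proof. by rewrite /tau; lia. Qed.

Local Notation MS := (M td_tree r omega tau).
Local Notation topS := (top td_tree r omega tau).
Local Notation pS := (p td_tree r).
Local Notation GS := (G td_tree r omega tau).
Local Notation botS := (bot td_tree r omega tau).
Local Notation WS := (W td_tree r omega).
Local Notation LS := (L td_tree r omega tau).

Definition R := Q :|: (U :&: \bigcup_(m in MS) B m).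

Lemma QR : Q \subset R. Proof. exact: subsetUl. Qed.
Lemma RU : R \subset U.
Proof. by rewrite subUset QU subsetIl. Qed.

Lemma card_rho (A : {set I}) : #|[set q in Q | rho q \in A]| = \sum_(z in A) omega z.
Proof.
rewrite -sum1_card (partition_big rho (fun z => z \in A)) /=; last first.
  by move=> q; rewrite inE => /andP[].
apply: eq_bigr => z hz; rewrite /omega -sum1_card; apply: eq_bigl => q.
rewrite !inE; case: (eqVneq (rho q) z) => [->|]; by rewrite ?hz ?andbT ?andbF.
Qed.

Lemma W_root : WS r = #|Q|.
Proof.
have -> : #|Q| = #|[set q in Q | rho q \in [set: I]]| by apply: eq_card => q; rewrite !inE andbT.
rewrite card_rho /W; apply: eq_bigl => z; by rewrite desc_root inE.
Qed.

Lemma card_MS : #|MS| <= 2 * LS r.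
Proof.
have := J_bound td_tree r omega tau_pos r.
have -> : J td_tree r omega tau r = #|MS|.
  rewrite /J -sum1_card big_mkcond [in RHS]big_mkcond; apply: eq_bigr => z _.
  by rewrite desc_root; case: (z \in MS).
lia.
Qed.

Lemma card_R : #|R| <= 2 * #|Q|.
Proof.
apply: leq_trans (leq_card_setU _ _) _.
have h1 : #|U :&: \bigcup_(m in MS) B m| <= n * #|MS|.
  apply: leq_trans (subset_leq_card (subsetIr _ _)) _.
  apply: leq_trans (card_bigcup_le _ _) _.
  rewrite -sum1_card big_distrr /=; apply: leq_sum => m _; by rewrite muln1.
have h2 := card_MS.
have h3 : LS r * tau <= #|Q| by rewrite -W_root; exact: leq_divM.
have etau : tau = n.*2 by [].
have : n * #|MS| <= #|Q|.
  apply: leq_trans (leq_mul (leqnn n) h2) _; nia.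
lia.
Qed.

Definition eUR := [rel x y | e x y && (x \in U :\: R) && (y \in U :\: R)].

Lemma UR_noM x : x \in U :\: R -> forall m, m \in MS -> x \notin B m.
Proof.
rewrite inE => /andP[xR xU] m hm; apply/negP => xm.
by move: xR; rewrite !inE xU /=; case/norP => _ /negP; apply; apply/bigcupP; exists m.
Qed.

Lemma notM_bag x i : (forall m, m \in MS -> x \notin B m) -> x \in B i -> i \notin MS.
Proof. by move=> h xi; apply/negP => /h; rewrite xi. Qed.

Lemma top_const x i j : (forall m, m \in MS -> x \notin B m) -> x \in B i -> x \in B j ->
  topS i = topS j.
Proof.
move=> hx xi xj; case/connectP: (td_conn xi xj) => s ps ->.
elim: s i xi ps => [//|b s IH] i xi /= /andP[/and3P[eib _ xb] ps].
rewrite -(IH b xb ps).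
apply: top_edge => //; exact: (notM_bag hx).
Qed.

Section Comp.
Variable c0 : V.
Hypothesis c0UR : c0 \in U :\: R.

Definition Cc := [set y | connect eUR c0 y].

Lemma Cc_UR y : y \in Cc -> y \in U :\: R.
Proof.
rewrite inE => /connectP [s ps ->].
elim: s c0 c0UR ps => [//|b s IH] x hx /= /andP[/andP[/andP[_ _] hb] ps].
exact: IH.
Qed.

Definition t0 := topS (rho c0).

Lemma Cc_top c i : c \in Cc -> c \in B i -> topS i = t0.
Proof.
rewrite inE => /connectP [s ps ->].
have base : forall i, c0 \in B i -> topS i = t0.
  move=> i' h; apply: (top_const (UR_noM c0UR)) => //; exact: rho_in.
elim: s c0 c0UR base ps i => [//|b s IH] x hx hb /= /andP[/andP[/andP[exb _] hbUR] ps] i.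
apply: IH => // i' bi'.
case: (td_edge exb) => k /andP[xk bk].
rewrite -(hb k xk); apply: (top_const (UR_noM hbUR)) => //.
Qed.

Lemma t0_notM : t0 \notin MS.
Proof. exact: (top_notM tau_pos (notM_bag (UR_noM c0UR) (rho_in c0))). Qed.

Lemma exit x j : x \in B j -> j \notin MS -> topS j = t0 ->
  (exists2 m, m \in MS & x \in B m) ->
  exists2 m', x \in B m' & (m' = pS t0) \/ (m' \in botS t0).
Proof.
move=> xj jM tj [m mM xm].
case/connectP: (td_conn xj xm) => s ps lm.
elim: s j xj jM tj ps lm => [|b s IH] j xj jM tj /=.
  by move=> _ ejm; move: jM; rewrite -ejm mM.
move=> /andP[/and3P[ejb _ xb] ps] lm.
case: (boolP (b \in MS)) => bM; last first.
  apply: (IH b) => //; rewrite -tj; apply/esym; exact: top_edge.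
exists b => //.
have njb : j != b by apply/eqP => h; move: jM; rewrite h bM.
case: (eI_par td_tree r ejb) => hp.
  left.
  have njr : j != r by apply/eqP => h; move: hp njb; rewrite h p_r => ->; rewrite eqxx.
  have sj : stop td_tree r omega tau j by rewrite /stop (negbTE njr) hp bM orbT.
  by rewrite -tj top_stop.
right; rewrite inE bM /= hp.
rewrite -tj; exact: (G_top tau_pos jM).
Qed.

Lemma boundary : #|[set x in R | [exists c in Cc, e c x]]| <= 4 * n.
Proof.
set S := [set x in R | _].
have hsub : S \subset B (pS t0) :|: \bigcup_(m in botS t0) B m :|: [set q in Q | rho q \in GS t0].
  apply/subsetP => x; rewrite inE => /andP[xR /existsP [c /andP[cC ecx]]].
  case: (td_edge ecx) => j /andP[cj xj].
  have tj := Cc_top cC cj.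
  have jM : j \notin MS by apply: (notM_bag (UR_noM (Cc_UR cC))).
  case: (boolP [exists m in MS, x \in B m]) => [/exists_inP [m mM xm]|nex].
    case: (exit xj jM tj (ex_intro2 _ _ m mM xm)) => m' xm' [em|hb].
      by rewrite !in_setU -em xm'.
    rewrite !in_setU; apply/orP; left; apply/orP; right; apply/bigcupP; by exists m'.
  have xQ : x \in Q.
    move: xR; rewrite in_setU => /orP[//|]; rewrite in_setI => /andP[_ /bigcupP [m mM xm]].
    by move: nex => /exists_inP []; exists m.
  have hx : forall m, m \in MS -> x \notin B m.
    by move=> m mM; apply/negP => xm; move: nex => /exists_inP []; exists m.
  have trx : topS (rho x) = t0 by rewrite -tj; apply: (top_const hx) => //; exact: rho_in.
  rewrite !in_setU; apply/orP; right; rewrite inE xQ /= -trx.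
  exact: (G_top tau_pos (notM_bag hx (rho_in x))).
apply: leq_trans (subset_leq_card hsub) _.
apply: leq_trans (leq_card_setU _ _) _.
apply: leq_trans (leq_add (leq_card_setU _ _) (leqnn _)) _.
have h1 := hn (pS t0).
have h2 : #|\bigcup_(m in botS t0) B m| <= n.
  apply: leq_trans (card_bigcup_le _ _) _.
  have hb := bot_le tau_pos t0_notM.
  have : \sum_(i in botS t0) #|B i| <= #|botS t0| * n.
    rewrite -sum1_card big_distrl /=; apply: leq_sum => i _; by rewrite mul1n.
  move: hb; case: (0 < LS t0) => /= hb; nia.
have h3 : #|[set q in Q | rho q \in GS t0]| < tau.
  rewrite card_rho.
  have := region_weight tau_pos t0_notM.
  have := divn_eq (WS t0) tau; have := ltn_pmod (WS t0) tau_pos.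
  rewrite /L; lia.
have etau : tau = n.*2 by []. lia.
Qed.

End Comp.
End Sep.
Section Struct.
Variables (V : finType) (e : rel V) (Wd Dch : nat).

Record TPS (U Q : {set V}) (P : {set {set V}}) (par : {set V} -> {set V})
  (R0 : {set V}) (rk : {set V} -> nat) (cr : nat) : Prop := TPSI {
  tp_part : partition P U;
  tp_root : R0 \in P;
  tp_Q : Q \subset R0;
  tp_par : forall X, X \in P -> X != R0 -> par X \in P /\ rk (par X) < rk X;
  tp_edge : forall X Y v w, X \in P -> Y \in P -> v \in X -> w \in Y -> e v w ->
       X = Y \/ (X != R0 /\ par X = Y) \/ (Y != R0 /\ par Y = X);
  tp_size : forall X, X \in P -> #|X| <= Wd;
  tp_ch : forall X, X \in P -> X != R0 -> #|[set Y in P | (Y != R0) && (par Y == X)]| <= Dch;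
  tp_chr : #|[set Y in P | (Y != R0) && (par Y == R0)]| <= cr }.

Lemma part_sub (P : {set {set V}}) U X : partition P U -> X \in P -> X \subset U.
Proof.
case/and3P => /eqP <- _ _ hX; apply/subsetP => x hx; apply/bigcupP; by exists X.
Qed.

Lemma part_uniq (P : {set {set V}}) U X Y v : partition P U -> X \in P -> Y \in P ->
  v \in X -> v \in Y -> X = Y.
Proof.
case/and3P => _ /trivIsetP h _ hX hY vX vY; apply/eqP; apply/negPn/negP => nXY.
by move: (h _ _ hX hY nXY) => /disjointFr /(_ vX); rewrite vY.
Qed.

Lemma part_ne0 (P : {set {set V}}) U X : partition P U -> X \in P -> X != set0.
Proof. by case/and3P => _ _ h0 hX; apply/eqP => e0; move: h0; rewrite -e0 hX. Qed.

Lemma part_cover (P : {set {set V}}) U v : partition P U -> v \in U -> exists2 X, X \in P & v \in X.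
Proof. by case/and3P => /eqP <- _ _ /bigcupP [X hX vX]; exists X. Qed.

Lemma tps_base (U Q : {set V}) : Q \subset U -> U != set0 -> #|U| <= Wd ->
  TPS U Q [set U] id U (fun _ => 0) 0.
Proof.
move=> QU U0 UW; split => //.
- rewrite /partition /cover big_set1 eqxx /= inE eq_sym U0 andbT.
  by apply/trivIsetP => A B; rewrite !inE => /eqP -> /eqP ->; rewrite eqxx.
- by rewrite inE.
- by move=> X; rewrite inE => /eqP ->; rewrite eqxx.
- by move=> X Y v w; rewrite !inE => /eqP -> /eqP -> _ _ _; left.
- by move=> X; rewrite inE => /eqP ->.
- by move=> X; rewrite inE => /eqP ->; rewrite eqxx.
- rewrite leqn0 cards_eq0; apply/eqP/setP => Y; rewrite !inE.
  by case: (Y == U).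
Qed.

Section Glue.
Variables (U1 Q1 U2 Q2 : {set V}) (P1 P2 : {set {set V}}) (par1 par2 : {set V} -> {set V})
  (R1 R2 : {set V}) (rk1 rk2 : {set V} -> nat) (c1 : nat).
Hypothesis S1 : TPS U1 Q1 P1 par1 R1 rk1 c1.
Hypothesis S2 : TPS U2 Q2 P2 par2 R2 rk2 Dch.
Hypothesis dU : [disjoint U1 & U2].
Hypothesis cross : forall v w, v \in U1 -> w \in U2 -> e v w || e w v -> (v \in R1) && (w \in Q2).

Definition gpar X := if X \in P2 then (if X == R2 then R1 else par2 X) else par1 X.
Definition grk X := if X \in P2 then (rk1 R1).+1 + rk2 X else rk1 X.

Lemma P12 X : X \in P1 -> X \notin P2.
Proof.
move=> h1; apply/negP => h2.
have s1 := part_sub (tp_part S1) h1; have s2 := part_sub (tp_part S2) h2.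
have := part_ne0 (tp_part S1) h1; case/set0Pn => x xX.
by move: dU => /disjointFr /(_ (subsetP s1 x xX)); rewrite (subsetP s2 x xX).
Qed.

Lemma R1P2 : R1 \notin P2. Proof. exact: P12 (tp_root S1). Qed.

Lemma glue : TPS (U1 :|: U2) Q1 (P1 :|: P2) gpar R1 grk c1.+1.
Proof.
have pa1 := tp_part S1; have pa2 := tp_part S2.
have r1 := tp_root S1; have r2 := tp_root S2.
have nR12 : R2 != R1 by apply/eqP => h; move: R1P2; rewrite -h r2.
split.
- move: pa1 pa2 => /and3P[/eqP c1' t1 z1] /and3P[/eqP c2' t2 z2].
  rewrite /partition /cover bigcup_setU -/(cover P1) -/(cover P2) c1' c2' eqxx /=.
  rewrite trivIsetU //; last by rewrite c1' c2'.
  by rewrite in_setU negb_or z1 z2.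
- by rewrite in_setU r1.
- exact: tp_Q S1.
- move=> X; rewrite in_setU => /orP[h1|h2] nX.
    case: (tp_par S1 h1 nX) => hp hr.
    have gp : gpar X = par1 X by rewrite /gpar (negbTE (P12 h1)).
    have gr : grk X = rk1 X by rewrite /grk (negbTE (P12 h1)).
    have gr1 : grk (par1 X) = rk1 (par1 X) by rewrite /grk (negbTE (P12 hp)).
    by rewrite gp gr gr1 in_setU hp.
  case: (eqVneq X R2) => [eX|nX2].
    have gp : gpar X = R1 by rewrite /gpar h2 eX eqxx.
    have gr1 : grk R1 = rk1 R1 by rewrite /grk (negbTE R1P2).
    have gr : grk X = (rk1 R1).+1 + rk2 X by rewrite /grk h2.
    rewrite gp gr gr1 in_setU r1; split => //; lia.
  case: (tp_par S2 h2 nX2) => hp hr.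
  have gp : gpar X = par2 X by rewrite /gpar h2 (negbTE nX2).
  have gr : grk X = (rk1 R1).+1 + rk2 X by rewrite /grk h2.
  have gr2 : grk (par2 X) = (rk1 R1).+1 + rk2 (par2 X) by rewrite /grk hp.
  rewrite gp gr gr2 in_setU hp orbT; split => //; lia.
- move=> X Y v w; rewrite !in_setU => hX hY vX wY evw.
  case/orP: hX => [h1|h2]; case/orP: hY => [k1|k2].
  + case: (tp_edge S1 h1 k1 vX wY evw) => [->|[[nx px]|[ny py]]]; first by left.
      by right; left; split => //; rewrite /gpar (negbTE (P12 h1)).
    by right; right; split => //; rewrite /gpar (negbTE (P12 k1)).
  + have vU1 := subsetP (part_sub pa1 h1) v vX.
    have wU2 := subsetP (part_sub pa2 k2) w wY.
    case/andP: (cross vU1 wU2 (introT orP (or_introl evw))) => vR wQ.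
    have eX : X = R1 by exact: part_uniq pa1 h1 r1 vX vR.
    have eY : Y = R2 by exact: (part_uniq pa2 k2 r2 wY (subsetP (tp_Q S2) w wQ)).
    right; right; subst X Y; split => //; by rewrite /gpar r2 eqxx.
  + have vU2 := subsetP (part_sub pa2 h2) v vX.
    have wU1 := subsetP (part_sub pa1 k1) w wY.
    case/andP: (cross wU1 vU2 (introT orP (or_intror evw))) => wR vQ.
    have eY : Y = R1 by exact: part_uniq pa1 k1 r1 wY wR.
    have eX : X = R2 by exact: (part_uniq pa2 h2 r2 vX (subsetP (tp_Q S2) v vQ)).
    right; left; subst X Y; split => //; by rewrite /gpar r2 eqxx.
  + case: (tp_edge S2 h2 k2 vX wY evw) => [->|[[nx px]|[ny py]]]; first by left.
      right; left; split; first by apply/eqP => e1; move: R1P2; rewrite -e1 h2.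
      by rewrite /gpar h2 (negbTE nx).
    right; right; split; first by apply/eqP => e1; move: R1P2; rewrite -e1 k2.
    by rewrite /gpar k2 (negbTE ny).
- move=> X; rewrite in_setU => /orP[h|h]; [by have := tp_size S1 h | by have := tp_size S2 h].
- move=> X; rewrite in_setU => /orP[h1|h2] nX.
    apply: leq_trans (tp_ch S1 h1 nX); apply: subset_leq_card; apply/subsetP => Y.
    rewrite !inE => /andP[/orP[k1|k2] /andP[nY /eqP pY]].
      by rewrite k1 nY /=; move: pY; rewrite /gpar (negbTE (P12 k1)) => ->.
    exfalso; move: pY; rewrite /gpar k2.
    case: (eqVneq Y R2) => [eY|nY2] /= e1.
      by move: nX; rewrite -e1 eqxx.
    case: (tp_par S2 k2 nY2) => hp _; by move: (P12 h1); rewrite -e1 hp.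
  have nX1 : X != R1 by apply/eqP => e1; move: R1P2; rewrite -e1 h2.
  have hch : [set Y in P1 :|: P2 | (Y != R1) && (gpar Y == X)] \subset [set Y in P2 | (Y != R2) && (par2 Y == X)].
    apply/subsetP => Y; rewrite !inE => /andP[/orP[k1|k2] /andP[nY /eqP pY]].
      by exfalso; move: pY; rewrite /gpar (negbTE (P12 k1)) => e1; case: (tp_par S1 k1 nY) => hp _; move: (P12 hp); rewrite e1 h2.
    rewrite k2 /=; move: pY; rewrite /gpar k2.
    case: (eqVneq Y R2) => [eY|nY2] /=; last by move=> ->; rewrite eqxx.
    by move=> e1; move: nX1; rewrite -e1 eqxx.
  apply: leq_trans (subset_leq_card hch) _.
  case: (eqVneq X R2) => [eX|nX2]; last by have := tp_ch S2 h2 nX2.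
  by subst X; exact: tp_chr S2.
- have hch : [set Y in P1 :|: P2 | (Y != R1) && (gpar Y == R1)] \subset R2 |: [set Y in P1 | (Y != R1) && (par1 Y == R1)].
    apply/subsetP => Y; rewrite !inE => /andP[/orP[k1|k2] /andP[nY /eqP pY]].
      by move: pY; rewrite /gpar (negbTE (P12 k1)) => ->; rewrite k1 nY eqxx !orbT.
    move: pY; rewrite /gpar k2; case: (eqVneq Y R2) => [->|nY2] /=; first by [].
    by move=> e1; case: (tp_par S2 k2 nY2) => hp _; move: R1P2; rewrite -e1 hp.
  apply: leq_trans (subset_leq_card hch) _.
  rewrite cardsU1; have := tp_chr S1; case: (R2 \notin _) => /=; lia.
Qed.

End Glue.
End Struct.
Section Group.
Variables (V : finType) (e : rel V).
Hypothesis esym : symmetric e.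
Variable Dl : nat.
Hypothesis hdeg : forall v, #|[set w | e v w]| <= Dl.
Variable aa : nat.
Variables (U R : {set V}).

Definition NR := [set w | [exists x in R, e x w]].
Definition ur := [rel x y | e x y && (x \in U :\: R) && (y \in U :\: R)].
Definition compo c0 := [set y | connect ur c0 y].
Definition load (X : {set V}) := #|NR :&: X|.
Definition closedb (X : {set V}) := [forall x in X, forall y, (e x y && (y \in U :\: R)) ==> (y \in X)].
Definition validG (G : {set {set V}}) :=
  [&& partition G (U :\: R), [forall X in G, closedb X] & [forall X in G, load X <= aa]].

Lemma card_NR : #|NR| <= Dl * #|R|.
Proof.
have -> : NR = \bigcup_(x in R) [set w | e x w].
  apply/setP => w; rewrite inE; apply/existsP/bigcupP => [[x /andP[xR exw]]|[x xR]].
    by exists x => //; rewrite inE.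
  by rewrite inE => exw; exists x; rewrite xR.
apply: leq_trans (card_bigcup_le _ _) _.
rewrite mulnC -sum1_card big_distrl /=; apply: leq_sum => x _; by rewrite mul1n.
Qed.

Lemma ur_sym : symmetric ur.
Proof. move=> x y /=; rewrite esym; by case: (x \in _); case: (y \in _); rewrite ?andbT ?andbF. Qed.

Lemma compo_UR c0 y : c0 \in U :\: R -> y \in compo c0 -> y \in U :\: R.
Proof.
move=> h0; rewrite inE => /connectP [s ps ->].
elim: s c0 h0 ps => [//|b s IH] x hx /= /andP[/andP[/andP[_ _] hb] ps].
exact: IH.
Qed.

Lemma compo_self c0 : c0 \in compo c0.
Proof. by rewrite inE connect0. Qed.

Lemma compo_eq x z : z \in compo x -> compo z = compo x.
Proof.
rewrite inE => hxz; apply/setP => y; rewrite !inE.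
apply/idP/idP => h; first exact: connect_trans hxz h.
rewrite (sym_connect_sym ur_sym) in hxz; exact: connect_trans hxz h.
Qed.

Lemma compo_closed c0 x y : x \in compo c0 -> y \in U :\: R -> e x y -> x \in U :\: R -> y \in compo c0.
Proof.
move=> hx hy exy hxUR; move: hx; rewrite inE => hx; rewrite inE.
apply: connect_trans hx _; apply: connect1.
by rewrite /= exy hxUR hy.
Qed.

Definition comps := [set compo c0 | c0 in U :\: R].

Lemma comps_valid :
  (forall c0, c0 \in U :\: R -> #|[set x in R | [exists c in compo c0, e c x]]| * Dl <= aa) ->
  validG comps.
Proof.
move=> hb; apply/and3P; split.
- apply/and3P; split.
  + apply/eqP/setP => y; apply/bigcupP/idP => [[X /imsetP [c0 h0 ->] hy]|hy].
      exact: compo_UR h0 hy.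
    by exists (compo y); [apply/imsetP; exists y | exact: compo_self].
  + apply/trivIsetP => X Y /imsetP [x hx ->] /imsetP [y hy ->] nXY.
    apply/pred0P => z /=; apply/negP => /andP[zx zy].
    by move: nXY; rewrite -(compo_eq zx) -(compo_eq zy) eqxx.
  + apply/negP => /imsetP [c0 h0 e0].
    by move: (compo_self c0); rewrite -e0 inE.
- apply/forall_inP => X /imsetP [c0 h0 ->]; apply/forall_inP => x hx.
  apply/forallP => y; apply/implyP => /andP[exy hy].
  exact: (compo_closed hx hy exy (compo_UR h0 hx)).
- apply/forall_inP => X /imsetP [c0 h0 ->].
  apply: leq_trans (hb c0 h0).
  set bd := [set x in R | _].
  have hsub : NR :&: compo c0 \subset \bigcup_(x in bd) [set w | e x w].
    apply/subsetP => w; rewrite !inE => /andP[/existsP [x /andP[xR exw]] wc].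
    apply/bigcupP; exists x; last by rewrite inE.
    rewrite inE xR /=; apply/existsP; exists w; rewrite esym exw andbT inE; exact: wc.
  apply: leq_trans (subset_leq_card hsub) _.
  apply: leq_trans (card_bigcup_le _ _) _.
  rewrite -sum1_card big_distrl /=; apply: leq_sum => x _; by rewrite mul1n.
Qed.

Lemma validG_part G : validG G -> partition G (U :\: R). Proof. by case/and3P. Qed.
Lemma validG_closed G X : validG G -> X \in G -> closedb X. Proof. by case/and3P => _ /forall_inP h _; exact: h. Qed.
Lemma validG_load G X : validG G -> X \in G -> load X <= aa. Proof. by case/and3P => _ _ /forall_inP h; exact: h. Qed.

Lemma merge G X Y : validG G -> X \in G -> Y \in G -> X != Y -> load X + load Y <= aa ->
  validG ((X :|: Y) |: (G :\ X :\ Y)) /\ #|(X :|: Y) |: (G :\ X :\ Y)| < #|G|.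
Proof.
move=> vG hX hY nXY hl.
have pG := validG_part vG.
case/and3P: pG => /eqP cG /trivIsetP tG z0.
have dXY : [disjoint X & Y] by exact: tG.
set G' := (X :|: Y) |: (G :\ X :\ Y).
split; last first.
  have c1 : #|G| = #|G :\ X|.+1 by rewrite (cardsD1 X G) hX.
  have c2 : #|G :\ X| = #|G :\ X :\ Y|.+1 by rewrite (cardsD1 Y (G :\ X)) in_setD1 hY (eq_sym Y X) nXY.
  rewrite /G' cardsU1.
  move: (_ \notin _) => b; rewrite c1 c2; by case: b.
apply/and3P; split.
- apply/and3P; split.
  + apply/eqP/setP => z; rewrite -cG; apply/bigcupP/bigcupP.
      move=> [Z]; rewrite !inE => /orP[/eqP ->|/andP[_ /andP[_ hZ]]]; last by exists Z.
      by rewrite inE => /orP[zX|zY]; [exists X|exists Y].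
    move=> [Z hZ zZ].
    case: (eqVneq Z X) => [eZ|nZX]; first by exists (X :|: Y); rewrite ?inE ?eqxx //= -eZ zZ.
    case: (eqVneq Z Y) => [eZ|nZY]; first by exists (X :|: Y); rewrite ?inE ?eqxx //= -eZ zZ orbT.
    by exists Z => //; rewrite !inE nZX nZY hZ orbT.
  + apply/trivIsetP => A C; rewrite !inE.
    have aux : forall Z, Z \in G -> Z != X -> Z != Y -> [disjoint X :|: Y & Z].
      move=> Z hZ nZX nZY.
      have d1 : [disjoint X & Z] by apply: tG => //; rewrite eq_sym.
      have d2 : [disjoint Y & Z] by apply: tG => //; rewrite eq_sym.
      by rewrite -setI_eq0 setIUl setU_eq0 !setI_eq0 d1 d2.
    move=> /orP[/eqP ->|/andP[nAY /andP[nAX hA]]] /orP[/eqP ->|/andP[nCY /andP[nCX hC]]];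
      rewrite ?eqxx //.
    * by move=> _; exact: aux.
    * by move=> _; rewrite disjoint_sym; exact: aux.
    * exact: tG.
  + rewrite !inE negb_or; apply/andP; split.
      apply/eqP => e0; have : X \subset set0 by rewrite e0 subsetUl.
      by rewrite subset0 => /eqP eX; move: z0; rewrite -eX hX.
    apply/negP => /andP[_ /andP[_ h]]; by move: z0; rewrite h.
- apply/forall_inP => Z; rewrite !inE => /orP[/eqP ->|/andP[_ /andP[_ hZ]]];
    last exact: validG_closed vG hZ.
  apply/forall_inP => x; rewrite inE => hx; apply/forallP => y; apply/implyP => /andP[exy hy].
  rewrite inE; case/orP: hx => hx.
    by move: (validG_closed vG hX) => /forall_inP /(_ x hx) /forallP /(_ y); rewrite exy hy /= => ->.
  by move: (validG_closed vG hY) => /forall_inP /(_ x hx) /forallP /(_ y); rewrite exy hy /= => ->; rewrite orbT.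
- apply/forall_inP => Z; rewrite !inE => /orP[/eqP ->|/andP[_ /andP[_ hZ]]];
    last exact: validG_load vG hZ.
  apply: leq_trans hl; rewrite /load setIUr; exact: leq_card_setU.
Qed.

Lemma min_group : validG comps -> exists G, validG G /\
  (forall X Y, X \in G -> Y \in G -> X != Y -> aa < load X + load Y).
Proof.
move=> v0.
have ex : exists m, [exists G : {set {set V}}, validG G && (#|G| == m)].
  by exists #|comps|; apply/existsP; exists comps; rewrite v0 eqxx.
case: (ex_minnP ex) => m /existsP [G /andP[vG /eqP cG]] hmin.
exists G; split => // X Y hX hY nXY; rewrite ltnNge; apply/negP => hl.
case: (merge vG hX hY nXY hl) => v' c'.
have := hmin #|(X :|: Y) |: (G :\ X :\ Y)|.
rewrite -cG; have -> : [exists G0, validG G0 && (#|G0| == #|(X :|: Y) |: (G :\ X :\ Y)|)].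
  by apply/existsP; exists ((X :|: Y) |: (G :\ X :\ Y)); rewrite v' eqxx.
move=> /(_ isT); lia.
Qed.

Lemma sum_load G : partition G (U :\: R) -> \sum_(X in G) load X <= #|NR|.
Proof.
case/and3P => /eqP cG tG _.
have -> : \sum_(X in G) load X = \sum_(X in G) \sum_(x in X) (x \in NR : nat).
  apply: eq_bigr => X _; rewrite /load -sum1_card big_mkcond [in RHS]big_mkcond /=.
  by apply: eq_bigr => x _; rewrite inE; case: (x \in NR); case: (x \in X).
rewrite -(@big_trivIset V nat 0 addn G (fun x => (x \in NR : nat)) tG) /=.
rewrite -sum1_card big_mkcond [in X in _ <= X]big_mkcond /=; apply: leq_sum => x _.
by case: (x \in NR); case: (x \in cover G).
Qed.

Lemma count_groups G : validG G ->
  (forall X Y, X \in G -> Y \in G -> X != Y -> aa < load X + load Y) ->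
  #|G| <= (2 * #|NR|) %/ aa.+1 + 1.
Proof.
move=> vG hpair.
set H := [set X in G | aa < 2 * load X].
have h1 : #|G :\: H| <= 1.
  apply/card_le1_eqP => X Y; rewrite !inE => /andP[nX hX] /andP[nY hY].
  apply/eqP/negPn/negP => nXY; have := hpair Y X hY hX nXY.
  move: nX nY; rewrite hX hY /= -!leqNgt; lia.
have h2 : #|H| * aa.+1 <= 2 * #|NR|.
  apply: leq_trans _ (leq_mul (leqnn 2) (sum_load (validG_part vG))).
  rewrite big_distrr /= -sum1_card big_distrl /=.
  apply: leq_trans (_ : \sum_(X in H) 2 * load X <= _).
    apply: leq_sum => X; rewrite inE => /andP[_ h]; rewrite mul1n; exact: h.
  apply: sum_sub_le; apply/subsetP => X; rewrite inE => /andP[].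
  by [].
have h3 : #|H| <= (2 * #|NR|) %/ aa.+1 by rewrite leq_divRL.
have hHG : H \subset G by apply/subsetP => X; rewrite inE => /andP[].
have := cardsID H G; rewrite (setIidPr hHG); lia.
Qed.

End Group.
Section Main.
Variables (V : finType) (e : rel V) (I : finType) (eI : rel I) (B : I -> {set V}).
Hypothesis hTD : tree_decomposition e eI B.
Hypothesis esym : symmetric e.
Variable n : nat.
Hypothesis hn : forall i, #|B i| <= n.
Hypothesis npos : 0 < n.
Variable r : I.
Variable Dl : nat.
Hypothesis hdeg : forall v, #|[set w | e v w]| <= Dl.
Hypothesis Dpos : 0 < Dl.

Local Notation aa := (4 * n * Dl).
Local Notation TP := (TPS e (8 * n * Dl) (4 * Dl)).

Lemma tps_mono (U Q Q' : {set V}) (P : {set {set V}}) par (R0 : {set V}) rk c c' : TP U Q' P par R0 rk c -> Q \subset Q' -> c <= c' ->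
  TP U Q P par R0 rk c'.
Proof.
case=> h1 h2 h3 h4 h5 h6 h7 h8 hQ hc; split => //; first exact: subset_trans hQ h3.
exact: leq_trans h8 hc.
Qed.

Lemma arith1 g N R Q a D : g <= (2 * N) %/ a.+1 + 1 -> N <= D * R -> R <= 2 * Q -> Q <= a -> 0 < D -> g <= 4 * D.
Proof.
move=> h1 h2 h3 h4 h5.
have h6 : 2 * N < 4 * D * a.+1 by nia.
have : (2 * N) %/ a.+1 < 4 * D by rewrite ltn_divLR.
lia.
Qed.

Lemma arith2 u x m : u <= m.+1 -> 0 < x -> u - x <= m. Proof. lia. Qed.
Lemma arith3 x q n0 D : x <= 2 * q -> q <= 4 * n0 * D -> x <= 8 * n0 * D. Proof. lia. Qed.

Lemma glue_list (U RR Q : {set V}) (G : {set {set V}}) :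
  RR \subset U -> Q \subset RR -> RR != set0 -> #|RR| <= 8 * n * Dl ->
  validG e aa U RR G ->
  (forall X, X \in G -> exists P par R0 rk, TP X (NR e RR :&: X) P par R0 rk (4 * Dl)) ->
  forall s, uniq s -> {subset s <= G} ->
  exists P par rk, TP (RR :|: \bigcup_(X <- s) X) Q P par RR rk (size s).
Proof.
move=> RU' QR' R0 cR vG hX.
have pG := validG_part vG.
elim=> [|X s IH] /=.
  move=> _ _; rewrite big_nil setU0.
  by exists [set RR], id, (fun _ => 0); apply: tps_base.
move=> /andP[Xs us] hs.
have hs' : {subset s <= G} by move=> Y hY; apply: hs; rewrite inE hY orbT.
case: (IH us hs') => P1 [par1 [rk1 S1]].
have XG : X \in G by apply: hs; rewrite inE eqxx.
case: (hX X XG) => P2 [par2 [R2 [rk2 S2]]].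
have XUR : X \subset U :\: RR by exact: part_sub pG XG.
have dXY : forall Y, Y \in s -> [disjoint Y & X].
  move=> Y hY; case/and3P: pG => _ /trivIsetP tG _; apply: tG => //; first exact: hs' Y hY.
  by apply/eqP => eYX; move: Xs; rewrite -eYX hY.
have dU : [disjoint RR :|: \bigcup_(Y <- s) Y & X].
  rewrite -setI_eq0 setIUl setU_eq0; apply/andP; split.
    rewrite setI_eq0; apply/pred0P => z /=; apply/negP => /andP[zR zX].
    by move: (subsetP XUR z zX); rewrite inE zR.
  rewrite setI_eq0 disjoint_sym bigcup_seq; apply: bigcup_disjoint => Y hY.
  by rewrite disjoint_sym; exact: dXY.
have cross : forall v w, v \in RR :|: \bigcup_(Y <- s) Y -> w \in X -> e v w || e w v ->
    (v \in RR) && (w \in NR e RR :&: X).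
  move=> v w hv wX evw.
  have evw' : e v w by case/orP: evw => // h; rewrite esym.
  have wUR := subsetP XUR w wX.
  have vR : v \in RR.
    move: hv; rewrite in_setU => /orP[//|]; rewrite bigcup_seq => /bigcupP [Y hY vY].
    have := validG_closed vG (hs' Y hY).
    move=> /forall_inP /(_ v vY) /forallP /(_ w); rewrite evw' wUR /= => wY.
    by move: (dXY Y hY) => /disjointFr /(_ wY); rewrite wX.
  rewrite vR /= in_setI wX andbT inE; apply/existsP; exists v; by rewrite vR.
have S := glue S1 S2 dU cross.
have -> : RR :|: \bigcup_(Y <- X :: s) Y = (RR :|: \bigcup_(Y <- s) Y) :|: X.
  by rewrite big_cons setUA setUAC.
by eexists; eexists; eexists; exact: S.
Qed.

Lemma main_rec m : forall (U Q : {set V}), #|U| <= m -> Q \subset U -> #|Q| <= aa -> U != set0 ->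
  exists P par R0 rk, TP U Q P par R0 rk (4 * Dl).
Proof.
elim: m => [|m IH] U Q hU QU hQ U0.
  by exfalso; move: U0; rewrite -card_gt0; lia.
have [v0 v0U] := set0Pn _ U0.
pose Q' := if Q == set0 then [set v0] else Q.
have QQ' : Q \subset Q' by rewrite /Q'; case: eqP => [->|//]; rewrite sub0set.
have Q'U : Q' \subset U by rewrite /Q'; case: eqP => // _; rewrite sub1set.
have hQ' : #|Q'| <= aa.
  rewrite /Q'; case: eqP => // _; rewrite cards1; have : 0 < n * Dl by rewrite muln_gt0 npos Dpos.
  lia.
have Q'0 : Q' != set0.
  rewrite /Q'; case: (boolP (Q == set0)) => h /=; last exact: h.
  apply/set0Pn; exists v0; by rewrite inE.
pose RR := R hTD n r U Q'.
have RQ : Q' \subset RR := QR hTD n r U Q'.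
have RU' : RR \subset U := RU hTD n r Q'U.
have cR : #|RR| <= 2 * #|Q'| := card_R hTD hn npos r Q'U.
have R0 : RR != set0.
  case/set0Pn: Q'0 => q hq; apply/set0Pn; exists q; exact: (subsetP RQ).
have hb : forall c0, c0 \in U :\: RR ->
    #|[set x in RR | [exists c in compo e U RR c0, e c x]]| * Dl <= aa.
  move=> c0 h0; have := boundary hn npos Q'U h0.
  move=> hbd; apply: leq_trans (leq_mul hbd (leqnn Dl)) _; exact: leqnn.
have v0G := comps_valid esym hdeg hb.
case: (min_group v0G) => G [vG hpair].
have cG : #|G| <= 4 * Dl.
  exact: (arith1 (count_groups vG hpair) (card_NR hdeg RR) cR hQ' Dpos).
have hX : forall X, X \in G -> exists P par R0 rk, TP X (NR e RR :&: X) P par R0 rk (4 * Dl).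
  move=> X hXG; apply: IH.
  - have sX : X \subset U :\: RR := part_sub (validG_part vG) hXG.
    apply: leq_trans (subset_leq_card sX) _.
    rewrite cardsD (setIidPr RU').
    apply: arith2 hU _; by rewrite card_gt0.
  - exact: subsetIr.
  - exact: validG_load vG hXG.
  - exact: part_ne0 (validG_part vG) hXG.
have hR : #|RR| <= 8 * n * Dl := arith3 cR hQ'.
have sub : {subset enum (mem G) <= G} by move=> X; rewrite mem_enum.
case: (glue_list RU' (subset_trans QQ' RQ) R0 hR vG hX (enum_uniq (mem G)) sub) => P [par [rk S]].
exists P, par, RR, rk.
move: S; rewrite bigcup_seq.
have -> : \bigcup_(X in enum (mem G)) X = U :\: RR.
  case/and3P: (validG_part vG) => /eqP <- _ _; rewrite /cover.
  by apply: eq_bigl => X; rewrite mem_enum.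
have eU : RR :|: U :\: RR = U by rewrite -{1}(setIidPr RU') setID.
rewrite eU -cardE => S.
exact: tps_mono S (subxx _) cG.
Qed.

End Main.
Section Quot.
Variables (V : finType) (e : rel V) (Wd Dch : nat) (U Q : {set V}) (P : {set {set V}})
  (par : {set V} -> {set V}) (R0 : {set V}) (rk : {set V} -> nat) (cr : nat).
Hypothesis S : TPS e Wd Dch U Q P par R0 rk cr.

Definition TT := {X : {set V} | X \in P}.
Definition eTT (x y : TT) := (val x != val y) &&
  (((val x != R0) && (par (val x) == val y)) || ((val y != R0) && (par (val y) == val x))).

Lemma eTT_sym : symmetric eTT.
Proof. by move=> x y; rewrite /eTT eq_sym orbC. Qed.

Lemma eTT_irr : irreflexive eTT.
Proof. by move=> x; rewrite /eTT eqxx. Qed.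

Definition xr : TT := exist _ R0 (tp_root S).

Lemma conn_root : forall m (x : TT), rk (val x) <= m -> connect eTT x xr.
Proof.
elim=> [|m IH] x hx.
  case: (eqVneq (val x) R0) => [ex|nx].
    by have -> : x = xr by apply: val_inj.
  by case: (tp_par S (valP x) nx) => _ h; move: hx; lia.
case: (eqVneq (val x) R0) => [ex|nx].
  by have -> : x = xr by apply: val_inj.
case: (tp_par S (valP x) nx) => hp hr.
pose y : TT := exist _ (par (val x)) hp.
have hy : rk (par (val x)) <= m by lia.
apply: connect_trans (IH y hy).
apply: connect1; rewrite /eTT.
have e1 : val y = par (val x) by [].
rewrite e1 nx eqxx /= andbT.
by apply/eqP => h; move: hr; rewrite -h ltnn.
Qed.

Lemma eTT_rk (x y : TT) : eTT x y -> par (val x) = val y \/ rk (val x) < rk (val y).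
Proof.
case/andP => _ /orP[/andP[_ /eqP h]|/andP[ny /eqP h]]; first by left.
by right; case: (tp_par S (valP y) ny) => _; rewrite h.
Qed.

Lemma tree_TT : is_tree eTT.
Proof.
split.
- by split; [exact: eTT_sym | exact: eTT_irr].
- by apply/card_gt0P; exists xr.
- move=> x y; apply: connect_trans (conn_root (leqnn _)) _.
  rewrite (sym_connect_sym eTT_sym); exact: conn_root (leqnn _).
- move=> c hc /andP[cc uc].
  have c0 : head xr c \in c by case: c hc {cc uc} => // a c' _; rewrite inE eqxx.
  case: (arg_maxnP (fun x : TT => rk (val x)) c0) => x xc xmax.
  have := rot_index xc; set i := index x c => hrot.
  have := cc; rewrite -(rot_cycle i) hrot.
  have := uc; rewrite -(rot_uniq i) hrot.
  have := hc; rewrite -(size_rot i) hrot.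
  set s := drop i.+1 c ++ take i c.
  have sc : forall z, z \in s -> z \in c.
    by move=> z zs; rewrite -(mem_rot i) hrot inE zs orbT.
  case: s sc => [|y s'] sc //= hs /andP[_ uys] /andP[exy ps].
  case/lastP: s' sc hs uys ps => [|s'' z] sc hs //= uys.
  rewrite rcons_path last_rcons => /andP[_ ezx].
  have yc : y \in c by apply: sc; rewrite inE eqxx.
  have zc : z \in c by apply: sc; rewrite inE mem_rcons inE eqxx orbT.
  have ny : rk (val y) <= rk (val x) by exact: xmax y yc.
  have nz : rk (val z) <= rk (val x) by exact: xmax z zc.
  have ey : par (val x) = val y.
    by case: (eTT_rk exy) => // h; move: ny; rewrite leqNgt h.
  have ezx' : eTT x z by rewrite eTT_sym.
  have ez : par (val x) = val z.
    by case: (eTT_rk ezx') => // h; move: nz; rewrite leqNgt h.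
  have yz : y = z by apply: val_inj; rewrite -ey -ez.
  by move: uys; rewrite yz mem_rcons inE eqxx.
Qed.

Lemma deg_TT : cr <= Dch -> maxdeg eTT <= Dch.+1.
Proof.
move=> hc; apply/bigmax_leqP => x _.
have hsub : [set y | eTT x y] \subset [set y : TT | val y == par (val x)] :|:
    [set y : TT | (val y != R0) && (par (val y) == val x)].
  apply/subsetP => y; rewrite inE => /andP[_ /orP[/andP[_ /eqP h]|/andP[h1 h2]]].
    by rewrite in_setU inE h eqxx.
  by rewrite in_setU [in X in _ || X]inE h1 h2 orbT.
apply: leq_trans (subset_leq_card hsub) _; apply: leq_trans (leq_card_setU _ _) _.
have h1 : #|[set y : TT | val y == par (val x)]| <= 1.
  apply/card_le1_eqP => y z; rewrite !inE => /eqP hy /eqP hz; apply: val_inj; by rewrite hy hz.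
have h2 : #|[set y : TT | (val y != R0) && (par (val y) == val x)]| <= Dch.
  set A := [set y : TT | _].
  have -> : #|A| = #|[set val y | y in A]| by rewrite card_imset //; exact: val_inj.
  apply: leq_trans (_ : #|[set Y in P | (Y != R0) && (par Y == val x)]| <= Dch).
    apply: subset_leq_card; apply/subsetP => Y /imsetP [y hy ->].
    by rewrite inE (valP y) /=; move: hy; rewrite inE.
  case: (eqVneq (val x) R0) => [->|nx]; first exact: leq_trans (tp_chr S) hc.
  by have := tp_ch S (valP x) nx.
lia.
Qed.

Lemma part_TT : U = setT -> T_partition e eTT (fun x : TT => val x).
Proof.
move=> eU; split.
- move=> x y nxy; case/and3P: (tp_part S) => _ /trivIsetP t _.
  apply: t; [exact: valP|exact: valP|].
  by apply: contra nxy => /eqP h; apply/eqP; apply: val_inj.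
- move=> v; have : v \in U by rewrite eU inE.
  case/(part_cover (tp_part S)) => X hX vX; by exists (exist _ X hX).
- move=> v w x y evw vx wy; case: (eqVneq x y) => [->|nxy]; [by left | right].
  have nv : val x != val y by apply: contra nxy => /eqP h; apply/eqP; apply: val_inj.
  case: (tp_edge S (valP x) (valP y) vx wy evw) => [h|[[nx h]|[ny h]]].
  + by move: nv; rewrite h eqxx.
  + by rewrite /eTT nv nx h eqxx.
  + by rewrite /eTT nv ny h eqxx orbT.
Qed.

Lemma width_TT : partition_width (fun x : TT => val x) <= Wd.
Proof. apply/bigmax_leqP => x _; by have := tp_size S (valP x). Qed.

End Quot.

Theorem theorem6 (V : finType) (e : rel V) (k : nat) :
  simple_graph e -> nontrivial e -> treewidth_is e k ->
  exists (T : finType) (eT : rel T) (P : T -> {set V}),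
    [/\ is_tree eT, maxdeg eT <= 6 * maxdeg e,
        T_partition e eT P &
        partition_width P <= 2 * (k + 1) * (9 * maxdeg e - 1)].
Proof.
move=> [esym eirr] [u [v euv]] [[I [eI [B [hTD hw]]]] _].
have hn : forall i, #|B i| <= k + 1.
  move=> i; have := @leq_bigmax _ (fun i => #|B i|) i; move: hw; rewrite /td_width; lia.
have npos : 0 < k + 1 by lia.
have [r _] : exists r : I, r \in I.
  by case: hTD => [[_ hI _ _] _ _ _]; case/card_gt0P: hI => x _; exists x.
have hdeg : forall w, #|[set z | e w z]| <= maxdeg e.
  by move=> w; exact: (@leq_bigmax _ (fun w => #|[set z | e w z]|) w).
have Dpos : 0 < maxdeg e.
  apply: leq_trans (hdeg u); rewrite card_gt0; apply/set0Pn; exists v; by rewrite inE.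
have UT : [set: V] != set0 by apply/set0Pn; exists u.
case: (main_rec hTD esym hn npos r hdeg Dpos (leqnn #|[set: V]|) (sub0set _) _ UT).
  by rewrite cards0.
move=> P [par [R0 [rk S]]].
exists (TT P), (eTT par R0), (fun x : TT P => val x).
split.
- exact: tree_TT S.
- apply: leq_trans (deg_TT S (leqnn _)) _; lia.
- exact: part_TT S (erefl _).
- apply: leq_trans (width_TT S) _; nia.
Qed.
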